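(* Let $n\ge 1$ and let $\varphi(x)$ be any finite Boolean combination of polynomial equations $t(x)=0$ and inequations $u(x)\neq 0$, with $t,u\in\mathbb{C}[x_1,\dots,x_n]$, in the variables $x\in\mathbb{C}^n$. Then there exist polynomials $p,q\in\mathbb{C}[a,b,x_1,\dots,x_n]$ (with $a,b$ single scalar variables) such that for all $x\in\mathbb{C}^n$: $$\varphi(x)\iff(\exists a\in\mathbb{C})(\forall b\in\mathbb{C})\;p(a,b,x)=0,$$ $$\varphi(x)\iff(\forall a\in\mathbb{C})(\exists b\in\mathbb{C})\;q(a,b,x)=0.$$
   Context: A Boolean combination of polynomial equations and inequations is a formula built from atomic formulas of the form $t(x)=0$ and $u(x)\neq 0$ (with $t,u$ polynomials in $x=(x_1,\dots,x_n)$) using finitely many applications of $\wedge,\vee,\neg$. *)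

(* Defs.v *)
From HB Require Import structures.
From mathcomp Require Import all_boot all_order all_algebra.
From mathcomp Require Import mpoly.
From mathcomp Require Import complex.
From mathcomp Require Import reals.
Set Implicit Arguments. Unset Strict Implicit. Unset Printing Implicit Defensive.
Import Order.TTheory GRing.Theory Num.Theory.
Local Open Scope ring_scope.

Inductive pformula (K : comNzRingType) (n : nat) : Type :=
| PEq  of {mpoly K[n]}
| PNeq of {mpoly K[n]}
| PAnd of pformula K n & pformula K n
| POr  of pformula K n & pformula K n
| PNot of pformula K n.

Fixpoint pholds (K : comNzRingType) (n : nat) (f : pformula K n) (x : 'I_n -> K)
  : Prop :=
  match f with
  | PEq t => t.@[x] = 0
  | PNeq u => u.@[x] <> 0
  | PAnd f1 f2 => pholds f1 x /\ pholds f2 x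
  | POr f1 f2 => pholds f1 x \/ pholds f2 x
  | PNot f1 => ~ pholds f1 x
  end.

(* The point (a, b, x_1, ..., x_n) of K^(n+2): variable 0 is a, variable 1
   is b, variable i+2 is x_i. *)
Definition abx (K : comNzRingType) (n : nat) (a b : K) (x : 'I_n -> K)
  : 'I_n.+2 -> K :=
  fun i => match split (i : 'I_(2 + n)) with
           | inl j => if val j == 0%N then a else b
           | inr k => x k
           end.

(* Main.v *)
Require Import Defs.
From HB Require Import structures.
From mathcomp Require Import all_boot all_order all_algebra.
From mathcomp Require Import mpoly complex reals.
From Stdlib Require Import Classical.
Local Open Scope ring_scope.
Import GRing.Theory.

Section Aux.
Variable R : realType.
Variable n : nat.
Local Notation C := (R[i]).

Definition clause := (seq {mpoly C[n]} * {mpoly C[n]})%type.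
Definition csem (c : clause) (x : 'I_n -> C) : bool :=
  all (fun t => t.@[x] == 0) c.1 && (c.2.@[x] != 0).
Definition dsem (d : seq clause) x := has (fun c => csem c x) d.
Definition dconj (d1 d2 : seq clause) : seq clause :=
  [seq (c1.1 ++ c2.1, c1.2 * c2.2) | c1 <- d1, c2 <- d2].

Lemma dconj1 (c1 : clause) (d2 : seq clause) x :
  has (fun c2 => csem (c1.1 ++ c2.1, c1.2 * c2.2) x) d2
   = csem c1 x && has (fun c => csem c x) d2.
Proof.
elim: d2 => [|c2 d2 IH2] /=; first by rewrite andbF.
rewrite IH2 /csem /= all_cat mevalM mulf_eq0 negb_or.
by case: (all _ c1.1); case: (c1.2.@[x] != 0); case: (all _ c2.1);
   case: (c2.2.@[x] != 0).
Qed.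

Lemma dconjE d1 d2 x : dsem (dconj d1 d2) x = dsem d1 x && dsem d2 x.
Proof.
elim: d1 => [|c1 d1 IH] //=.
rewrite /dsem /dconj /= in IH *; rewrite has_cat IH has_map.
rewrite (eq_has (a2 := fun c2 => csem (c1.1 ++ c2.1, c1.2 * c2.2) x)) //.
rewrite dconj1.
by case: (csem c1 x); case: (has _ d1); case: (has _ d2).
Qed.

Lemma dcatE d1 d2 x : dsem (d1 ++ d2) x = dsem d1 x || dsem d2 x.
Proof. by rewrite /dsem has_cat. Qed.

Lemma dnf (phi : pformula C n) : exists d1 d2 : seq clause, forall x,
  (pholds phi x <-> dsem d1 x) /\ (~ pholds phi x <-> dsem d2 x).
Proof.
elim: phi => [t|u|f1 [a1 [b1 H1]] f2 [a2 [b2 H2]]|f1 [a1 [b1 H1]] f2 [a2 [b2 H2]]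
             |f [a [b H]]].
- exists [:: ([:: t], 1)], [:: ([::], t)] => x.
  rewrite /dsem /csem /= meval1 oner_neq0 !andbT !orbF.
  by split; case: eqP.
- exists [:: ([::], u)], [:: ([:: u], 1)] => x.
  rewrite /dsem /csem /= meval1 oner_neq0 !andbT !orbF.
  split; case: eqP => h; split => //.
  by move=> _ k; case: (k h).
- exists (dconj a1 a2), (b1 ++ b2) => x; rewrite dconjE dcatE /=.
  have [[A1 A1'] [B1 B1']] := H1 x; have [[A2 A2'] [B2 B2']] := H2 x.
  split; split.
  + by case=> /A1 -> /A2 ->.
  + by case/andP=> /A1' ? /A2' ?.
  + move=> N; apply/orP; case: (classic (pholds f1 x)) => h1.
      by right; apply: B2 => h2; apply: N.
    by left; apply: B1.
  + by case/orP=> [/B1' h|/B2' h] [] ? ?.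
- exists (a1 ++ a2), (dconj b1 b2) => x; rewrite dconjE dcatE /=.
  have [[A1 A1'] [B1 B1']] := H1 x; have [[A2 A2'] [B2 B2']] := H2 x.
  split; split.
  + by case=> [/A1 ->|/A2 ->] //; rewrite orbT.
  + by case/orP=> [/A1'|/A2']; [left|right].
  + move=> N; apply/andP; split; [apply: B1|apply: B2] => ?; apply: N;
      [left|right]; done.
  + by case/andP=> /B1' ? /B2' ? [].
- exists b, a => x; have [[A A'] [B B']] := H x; simpl.
  split; first by split.
  split; first by move=> h; apply: A; apply: NNPP.
  by move=> d k; apply: k; apply: A'.
Qed.

Definition liftp (t : {mpoly C[n]}) : {mpoly C[n.+2]} :=
  t \mPo [tuple 'X_(rshift 2 i : 'I_n.+2) | i < n].
Definition XA : {mpoly C[n.+2]} := 'X_(lshift n (ord0 : 'I_2) : 'I_n.+2).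
Definition XB : {mpoly C[n.+2]} := 'X_(lshift n (ord_max : 'I_2) : 'I_n.+2).
Fixpoint mts (ts : seq {mpoly C[n]}) : {mpoly C[n.+2]} :=
  if ts is t :: ts' then liftp t + XB * mts ts' else 0.
Definition mcl (c : clause) := XA * liftp c.2 - 1 + XB * mts c.1.
Definition mdnf (d : seq clause) := \prod_(c <- d) mcl c.

Fixpoint pts (ts : seq C) : {poly C} :=
  if ts is t :: ts' then t%:P + 'X * pts ts' else 0.
Definition pcl a x (c : clause) : {poly C} :=
  (a * c.2.@[x] - 1)%:P + 'X * pts [seq t.@[x] | t <- c.1].
Definition pdnf a x (d : seq clause) := \prod_(c <- d) pcl a x c.

Lemma liftpE a b x t : (liftp t).@[abx a b x] = t.@[x].
Proof.
rewrite /liftp comp_mpoly_meval; apply: meval_eq => i.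
rewrite tnth_mktuple mevalXU /abx.
by rewrite (_ : (rshift 2 i : 'I_(2 + n)) = unsplit (inr i)) // unsplitK.
Qed.

Lemma XAE a b x : XA.@[abx a b x] = a.
Proof.
rewrite /XA mevalXU /abx.
by rewrite (_ : (lshift n ord0 : 'I_(2 + n)) = unsplit (inl ord0)) // unsplitK.
Qed.

Lemma XBE a b x : XB.@[abx a b x] = b.
Proof.
rewrite /XB mevalXU /abx.
by rewrite (_ : (lshift n ord_max : 'I_(2 + n)) = unsplit (inl ord_max)) // unsplitK.
Qed.

Lemma mtsE a b x ts : (mts ts).@[abx a b x] = (pts [seq t.@[x] | t <- ts]).[b].
Proof.
elim: ts => [|t ts IH] /=; first by rewrite meval0 horner0.
by rewrite mevalD mevalM liftpE XBE IH hornerD hornerC hornerM hornerX.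
Qed.

Lemma mdnfE a b x d : (mdnf d).@[abx a b x] = (pdnf a x d).[b].
Proof.
rewrite /mdnf /pdnf; elim: d => [|c d IH]; first by rewrite !big_nil meval1 hornerC.
rewrite !big_cons mevalM hornerM IH; congr (_ * _).
rewrite /mcl /pcl mevalD mevalB mevalM meval1 XAE liftpE mevalM XBE mtsE.
by rewrite hornerD hornerC hornerM hornerX.
Qed.

Lemma cX_eq0 (c : C) (A : {poly C}) : (c%:P + 'X * A == 0) = (c == 0) && (A == 0).
Proof.
apply/eqP/andP => [h|[/eqP -> /eqP ->]]; last by rewrite mulr0 addr0.
have c0 : c = 0.
  by have := congr1 (horner^~ 0) h; rewrite hornerD hornerC hornerM hornerX mul0r addr0 horner0.
split; apply/eqP => //; move: h; rewrite c0 add0r => /eqP.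
by rewrite mulf_eq0 polyX_eq0 => /eqP.
Qed.

Lemma pts_eq0 ts : (pts ts == 0) = all (fun t => t == 0) ts.
Proof. by elim: ts => [|t ts IH] /=; rewrite ?eqxx // cX_eq0 IH. Qed.

Lemma pcl_eq0 a x c :
  (pcl a x c == 0) = (a * c.2.@[x] == 1) && all (fun t => t.@[x] == 0) c.1.
Proof. by rewrite /pcl cX_eq0 subr_eq0 pts_eq0 all_map. Qed.

Lemma pdnf0 a x d : pdnf a x d = 0 -> dsem d x.
Proof.
move/eqP; rewrite /pdnf prodf_seq_eq0 /dsem; apply: sub_has => c /=.
rewrite pcl_eq0 /csem => /andP[/eqP h ->] /=.
by apply/eqP => u0; move: h; rewrite u0 mulr0 => /eqP; rewrite eq_sym oner_eq0.
Qed.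

Lemma dsem_pdnf x d : dsem d x -> exists a, pdnf a x d = 0.
Proof.
case/hasP=> c cd /andP[ht hu]; exists (c.2.@[x])^-1.
apply/eqP; rewrite /pdnf prodf_seq_eq0; apply/hasP; exists c => //=.
by rewrite pcl_eq0 mulVf // eqxx.
Qed.

Lemma nz_ev {F : {poly C}} : F != 0 -> exists b, b * F.[b] = 1.
Proof.
move=> F0.
have sz : size ('X * F - 1) != 1%N.
  rewrite mulrC size_addl size_mulX // ?size_opp ?size_poly1.
    by rewrite eqSS size_poly_eq0.
  by rewrite ltnS lt0n size_poly_eq0.
have [b] := closed_rootP _ sz; rewrite /root hornerD hornerN hornerM hornerX hornerC.
by rewrite subr_eq0 => /eqP; exists b.
Qed.

Lemma EA d x : dsem d x <-> exists a, forall b, (mdnf d).@[abx a b x] = 0.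
Proof.
split.
  by case/dsem_pdnf=> a h; exists a => b; rewrite mdnfE h horner0.
case=> a h; apply: (@pdnf0 a); apply/eqP; apply: contraT => F0.
have [b hb] := nz_ev F0; move: hb; rewrite -mdnfE h mulr0 => /eqP.
by rewrite eq_sym oner_eq0.
Qed.

Lemma AE d x : ~ dsem d x <-> forall a, exists b, (XB * mdnf d - 1).@[abx a b x] = 0.
Proof.
split.
  move=> N a; have F0 : pdnf a x d != 0 by apply/eqP => /pdnf0.
  have [b hb] := nz_ev F0; exists b.
  by rewrite mevalB mevalM XBE mdnfE meval1 hb subrr.
move=> h /dsem_pdnf [a ha]; have [b] := h a.
rewrite mevalB mevalM XBE mdnfE meval1 ha horner0 mulr0 sub0r => /eqP.
by rewrite oppr_eq0 oner_eq0.
Qed.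

End Aux.

Theorem theorem1p1 (R : realType) (n : nat) (hn : (0 < n)%N)
    (phi : pformula R[i] n) :
  exists p q : {mpoly R[i][n.+2]},
    (forall x : 'I_n -> R[i],
        pholds phi x <->
        (exists a : R[i], forall b : R[i], p.@[abx a b x] = 0)) /\
    (forall x : 'I_n -> R[i],
        pholds phi x <->
        (forall a : R[i], exists b : R[i], q.@[abx a b x] = 0)).
Proof.
have [d1 [d2 H]] := @dnf R n phi.
exists (@mdnf R n d1), (@XB R n * @mdnf R n d2 - 1); split => x.
  by rewrite -EA; apply: (proj1 (H x)).
rewrite -AE; have [_ [B B']] := H x; split.
  by move=> h /B' h'; apply: h'.
by move=> h; apply: NNPP => h'; apply: h; apply: B.
Qed.
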